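(* Let $G=(V,E)$ be a connected graph, let $A\subseteq V$ be nonempty and let $U\subseteq V$. Then for every edge $\{u,v\}\in E$ with $u,v\in U$ there exists $a\in A$ with $u\in D_a$ and $v\in D_a$. In other words, $\bigcup_{a\in A}G[D_a]$ covers every edge of $G[U]$.
   Context: $\delta$ is the shortest-path metric of the unweighted graph $G$. For $S\subseteq V$ and $v\in V$, $\delta(S,v)=\min_{s\in S}\delta(s,v)$. $N_2(a)=\{u\in V:\delta(u,a)\le 2\}$. For $w\in V$, $C_A(w)=\{v\in V:\delta(w,v)<\delta(A,v)\}$. For $a\in A$, the extended Voronoi cell is $D_a=\Big(\bigcup_{b\in N_2(a)}C_A(b)\,\cup\,N_2(a)\Big)\cap U$. *)

(* Defs.v *)
From mathcomp Require Import all_boot.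
Set Implicit Arguments. Unset Strict Implicit. Unset Printing Implicit Defensive.

Section Graph.
Variables (T : finType) (e : rel T).

Definition simple_graph : Prop := symmetric e /\ irreflexive e.
Definition connected_graph : Prop := forall x y : T, connect e x y.

Fixpoint walkn (n : nat) (x y : T) : bool :=
  if n is n'.+1 then [exists z, e x z && walkn n' z y] else x == y.

(* shortest-path distance delta(x,y): least n with a walk of length n;
   equals #|T| ("infinity") if y is unreachable from x (never happens in a
   connected graph). *)
Definition dist (x y : T) : nat := find (fun n => walkn n x y) (iota 0 #|T|).

Definition dist_set (S : {set T}) (v : T) : nat :=
  \big[minn/#|T|]_(s in S) dist s v.

Definition N2 (a : T) : {set T} := [set u | dist u a <= 2].

Definition cell (A : {set T}) (w : T) : {set T} :=
  [set v | dist w v < dist_set A v].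

Definition Dcell (A U : {set T}) (a : T) : {set T} :=
  ((\bigcup_(b in N2 a) cell A b) :|: N2 a) :&: U.

End Graph.

(* Main.v *)
Require Import Defs.
From mathcomp Require Import all_boot.

Set Implicit Arguments. Unset Strict Implicit.
Section L.
Variables (T : finType) (e : rel T).
Hypothesis esym : symmetric e.
Hypothesis conn : connected_graph e.

Lemma walkn_ext n x y z : walkn e n x y -> e y z -> walkn e n.+1 x z.
Proof.
elim: n x => [|n IH] x /=.
  by move=> /eqP-> eyz; apply/existsP; exists z; rewrite eyz eqxx.
by case/existsP=> w /andP[exw wy] eyz; apply/existsP; exists w; apply/andP; split=> //; exact: IH.
Qed.

Lemma walkn_sym n x y : walkn e n x y -> walkn e n y x.
Proof.
elim: n x => [|n IH] x /=; first by move/eqP->.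
case/existsP=> w /andP[exw wy]; apply: walkn_ext (IH _ wy) _; by rewrite esym.
Qed.

Lemma walkn_split m n x y : walkn e (m + n) x y -> exists z, walkn e m x z && walkn e n z y.
Proof.
elim: m x => [|m IH] x /=; first by move=> h; exists x; rewrite eqxx.
case/existsP=> w /andP[exw /IH[z /andP[h1 h2]]]; exists z; rewrite h2 andbT.
by apply/existsP; exists w; rewrite exw.
Qed.

Lemma dist_le m x y : walkn e m x y -> dist e x y <= m.
Proof.
move=> h; rewrite /dist; case: (ltnP m #|T|) => hm.
  rewrite leqNgt; apply/negP=> /(before_find 0); by rewrite nth_iota // add0n h.
apply: leq_trans hm; by rewrite -{2}(size_iota 0 #|T|) find_size.
Qed.

Lemma walk_path x p : path e x p -> walkn e (size p) x (last x p).
Proof.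
elim: p x => [|y p IH] x /=; first by rewrite eqxx.
by case/andP=> exy /IH h; apply/existsP; exists y; rewrite exy.
Qed.

Lemma dist_lt x y : dist e x y < #|T|.
Proof.
have /connectP[p pp ->] := conn x y.
case/shortenP: pp => p' pp' up' _.
apply: leq_ltn_trans (dist_le (walk_path pp')) _.
have := card_uniqP up'; rewrite /= => <-; exact: max_card.
Qed.

Lemma walkn_dist x y : walkn e (dist e x y) x y.
Proof.
have hl := dist_lt x y; move: hl; rewrite /dist => hl.
have hh : has (fun n => walkn e n x y) (iota 0 #|T|).
  by rewrite has_find size_iota.
by have := nth_find 0 hh; rewrite nth_iota ?add0n // -{2}(size_iota 0 #|T|) -has_find.
Qed.

Lemma dist_set_le (A : {set T}) s v : s \in A -> dist_set e A v <= dist e s v.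
Proof.
move=> sA; rewrite /dist_set.
have : s \in index_enum T by rewrite mem_index_enum.
elim: (index_enum T) => [|i r IH] //; rewrite inE big_cons.
case/orP=> [/eqP<-|/IH h]; first by rewrite sA geq_minl.
by case: ifP => // _; rewrite geq_min h orbT.
Qed.

Lemma dist_set_ub (A : {set T}) v : dist_set e A v <= #|T|.
Proof. rewrite /dist_set; elim/big_ind: _ => [//|a b ha hb|s _]; [by rewrite geq_min ha | exact: ltnW (dist_lt _ _)]. Qed.

Lemma dist_set_ex (A : {set T}) v : A != set0 -> exists2 s, s \in A & dist e s v = dist_set e A v.
Proof.
case/set0Pn=> s0 s0A.
have : dist_set e A v = #|T| \/ exists2 s, s \in A & dist e s v = dist_set e A v.
  rewrite /dist_set; elim/big_ind: _ => [|a b ha hb|s sA]; [by left| |by right; exists s].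
  rewrite /minn; case: ifP=> _; [case: ha => ha; [left|right] | case: hb => hb; [left|right]]; by [].
case=> // h; have := dist_set_le v s0A; rewrite h leqNgt dist_lt //.
Qed.

Lemma dist_set_edge (A : {set T}) u v : e u v -> dist_set e A u <= (dist_set e A v).+1.
Proof.
move=> euv; rewrite {2}/dist_set; elim/big_ind: _ => [|a b ha hb|s sA].
- exact: leqW (dist_set_ub _ _).
- by rewrite /minn; case: ifP.
apply: leq_trans (dist_set_le u sA) _; apply: dist_le; apply: walkn_ext (walkn_dist _ _) _.
by rewrite esym.
Qed.

Lemma main_case (A U : {set T}) u v : A != set0 -> e u v -> u \in U -> v \in U ->
  dist_set e A u <= dist_set e A v ->
  exists2 a, a \in A & (u \in Dcell e A U a) && (v \in Dcell e A U a).
Proof.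
move=> A0 euv uU vU hle.
have [a aA da] := dist_set_ex u A0.
exists a => //; rewrite !inE uU vU !andbT.
have wau := walkn_dist a u; rewrite da in wau.
set d := dist_set e A u in wau hle da *.
case: (leqP d 1) => hd.
  apply/andP; split; apply/orP; right.
    by apply: leq_trans (dist_le (walkn_sym wau)) _; apply: leq_trans hd _.
  by apply: leq_trans (dist_le (walkn_sym (walkn_ext wau euv))) _.
have d2 : d = 2 + (d - 2) by rewrite subnKC.
rewrite d2 in wau; have [b /andP[w1 w2]] := walkn_split wau.
have bN : b \in N2 e a by rewrite inE; apply: dist_le (walkn_sym w1).
apply/andP; split; apply/orP; left; apply/bigcupP; exists b => //; rewrite inE.
  apply: leq_ltn_trans (dist_le w2) _; by rewrite ltn_subrL /= (ltnW hd).
have w3 := walkn_ext w2 euv.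
apply: leq_ltn_trans (dist_le w3) (leq_trans _ hle).
by rewrite -subSn // subSS ltn_subrL; case: (d) hd.
Qed.
End L.
Unset Implicit Arguments.

Lemma esym_rew (T : finType) (e : rel T) u v : symmetric e -> e u v -> e v u.
Proof. by move=> h; rewrite h. Qed.

Theorem lemma6 (T : finType) (e : rel T) (A U : {set T}) :
  simple_graph e -> connected_graph e -> A != set0 ->
  forall u v : T, e u v -> u \in U -> v \in U ->
  exists2 a, a \in A & (u \in Dcell e A U a) && (v \in Dcell e A U a).
Proof.
move=> [esym _] conn A0 u v euv uU vU.
case: (leqP (dist_set e A u) (dist_set e A v)) => h.
  exact: main_case.
have evu : e v u by rewrite esym.
have [a aA /andP[h1 h2]] := main_case esym conn A0 evu vU uU (ltnW h).
by exists a; rewrite ?h1 ?h2.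
Qed.
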